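(* Let $M=T^*Q$ be the phase space of the complexified planar Kepler problem with symplectic form $\omega=dx_1\wedge dy_1+dx_2\wedge dy_2$ and functions $\xi_1,c_1,c_2,c_3,c_4$ as in the context. Let $V=\{p\in M: c_2(p)+ic_3(p)\neq 0\}$, on which $(\xi_1,c_1,c_3,c_4)$ serve as local coordinates. Then \[\omega|_V=\left(\Big(\frac{i}{c_1}-\frac{c_3}{c_1(c_2+ic_3)}\Big)dc_1-\frac{i}{\xi_1}d\xi_1\right)\wedge dc_3+\frac{c_1}{c_2+ic_3}\,dc_1\wedge dc_4.\]
   Context: Let $U=\{(x_1,x_2)\in\mathbb{C}^2: x_1^2+x_2^2\neq 0\}$ and write $\xi_1=x_1+ix_2$, $\xi_2=x_1-ix_2$, so $\xi_1\xi_2=x_1^2+x_2^2\neq0$ on $U$. Take two copies $Q_I,Q_{II}$ of $U$. For each fixed $\xi_2\neq 0$, cut both $\xi_1$-slices $\mathbb{C}\setminus\{0\}$ along the half-line $\{\xi_1=t\xi_2^{-1}: t<0\}$ and glue them crosswise (upper edge of sheet $I$ to lower edge of sheet $II$ and vice versa), as for the Riemann surface of a square root; letting $\xi_2$ vary gives a complex $2$-manifold $Q$, whose points are written $(\xi_1,\xi_2)_k$, $k\in\{I,II\}$. Define $c_1=\sqrt{\xi_1\xi_2}$ (principal branch, argument in $(-\pi/2,\pi/2]$) on $Q_I$ and $c_1=-\sqrt{\xi_1\xi_2}$ on $Q_{II}$, a holomorphic square root of $x_1^2+x_2^2$ on $Q$. The phase space is $M=T^*Q\cong Q\times\mathbb{C}^2$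 with fiber coordinates $(y_1,y_2)$; set $\eta_1=y_1+iy_2$, $\eta_2=y_1-iy_2$, and $c_2=\xi_1\eta_2$, $c_3=\frac{i}{2}(\xi_1\eta_2-\xi_2\eta_1)=x_1y_2-x_2y_1$ (angular momentum), $c_4=\frac12\eta_1\eta_2-\frac1{c_1}=\frac12(y_1^2+y_2^2)-\frac1{c_1}$ (Kepler Hamiltonian). These satisfy $2c_4c_1^2+2c_1=c_2^2+2ic_3c_2$. *)

(* Defs.v *)
From HB Require Import structures.
From mathcomp Require Import all_boot all_order all_algebra.
From mathcomp Require Import all_classical all_reals all_analysis.
From mathcomp Require Import complex.
Set Implicit Arguments. Unset Strict Implicit. Unset Printing Implicit Defensive.
Import Order.TTheory GRing.Theory Num.Theory.
Import numFieldNormedType.Exports.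
Local Open Scope ring_scope.
Local Open Scope complex_scope.

Definition Cx (R : realType) : numClosedFieldType := R[i].

Section Kepler.
Variable R : realType.
Local Notation K := (Cx R).

(* phase-space points p = ((x1, x2), (y1, y2)) *)
Definition xi1 (p : (K * K) * (K * K)) : K := p.1.1 + 'i * p.1.2.
Definition xi2 (p : (K * K) * (K * K)) : K := p.1.1 - 'i * p.1.2.
Definition eta1 (p : (K * K) * (K * K)) : K := p.2.1 + 'i * p.2.2.
Definition eta2 (p : (K * K) * (K * K)) : K := p.2.1 - 'i * p.2.2.
(* c1 on M, given a (local holomorphic) square root c1q of x1^2+x2^2 on Q *)
Definition C1 (c1q : K * K -> K) (p : (K * K) * (K * K)) : K := c1q p.1.
Definition C2 (p : (K * K) * (K * K)) : K := xi1 p * eta2 p.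
Definition C3 (p : (K * K) * (K * K)) : K := p.1.1 * p.2.2 - p.1.2 * p.2.1.
Definition C4 (c1q : K * K -> K) (p : (K * K) * (K * K)) : K :=
  (p.2.1 ^+ 2 + p.2.2 ^+ 2) / 2%:R - (C1 c1q p)^-1.

(* omega = dx1 /\ dy1 + dx2 /\ dy2, evaluated on tangent vectors u v *)
Definition omega (u v : (K * K) * (K * K)) : K :=
  (u.1.1 * v.2.1 - v.1.1 * u.2.1) + (u.1.2 * v.2.2 - v.1.2 * u.2.2).

Definition wedge (a b : (K * K) * (K * K) -> K) (u v : (K * K) * (K * K)) : K :=
  a u * b v - a v * b u.
End Kepler.

(* Main.v *)
Require Import Defs.
From HB Require Import structures.
From mathcomp Require Import all_boot all_order all_algebra.
From mathcomp Require Import all_classical all_reals all_analysis.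
From mathcomp Require Import complex ring.
Import Order.TTheory GRing.Theory Num.Theory.
Import numFieldNormedType.Exports.
Local Open Scope ring_scope.
Local Open Scope complex_scope.

Definition fstf (K : numFieldType) (U V : normedModType K) (x : U * V) := x.1.
Definition sndf (K : numFieldType) (U V : normedModType K) (x : U * V) := x.2.
Section S.
Variables (K : numFieldType) (U V : normedModType K).
Lemma fst_lin : linear (@fstf K U V).
Proof. by move=> a x y. Qed.
Lemma snd_lin : linear (@sndf K U V).
Proof. by move=> a x y. Qed.
HB.instance Definition _ := GRing.isLinear.Build K (U*V)%type U _ (@fstf K U V) fst_lin.
HB.instance Definition _ := GRing.isLinear.Build K (U*V)%type V _ (@sndf K U V) snd_lin.

Lemma is_diff_fst (x : U * V) : is_diff x (@fst U V) fst.
Proof.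
have fc : continuous (@fstf K U V) by move=> z; apply: cvg_fst.
apply: DiffDef; first exact: (linear_differentiable _ fc).
exact: (diff_lin _ fc).
Qed.
Lemma is_diff_snd (x : U * V) : is_diff x (@snd U V) snd.
Proof.
have fc : continuous (@sndf K U V) by move=> z; apply: cvg_snd.
apply: DiffDef; first exact: (linear_differentiable _ fc).
exact: (diff_lin _ fc).
Qed.
End S.

Section P.
Variable R : realType.
Local Notation K := (Cx R).
Local Notation M := ((K * K) * (K * K))%type.

Lemma d11 (p : M) : is_diff p (fun q : M => q.1.1) (fun w : M => w.1.1).
Proof.
have h1 : is_diff p (@fst (K*K)%type (K*K)%type) fst := is_diff_fst _ _ _ p.
have h2 : is_diff (fst p) (@fst K K) fst := is_diff_fst _ _ _ (fst p).
exact: (is_diff_comp h1 h2).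
Qed.
Lemma d12 (p : M) : is_diff p (fun q : M => q.1.2) (fun w : M => w.1.2).
Proof.
have h1 : is_diff p (@fst (K*K)%type (K*K)%type) fst := is_diff_fst _ _ _ p.
have h2 : is_diff (fst p) (@snd K K) snd := is_diff_snd _ _ _ (fst p).
exact: (is_diff_comp h1 h2).
Qed.
Lemma d21 (p : M) : is_diff p (fun q : M => q.2.1) (fun w : M => w.2.1).
Proof.
have h1 : is_diff p (@snd (K*K)%type (K*K)%type) snd := is_diff_snd _ _ _ p.
have h2 : is_diff (snd p) (@fst K K) fst := is_diff_fst _ _ _ (snd p).
exact: (is_diff_comp h1 h2).
Qed.
Lemma d22 (p : M) : is_diff p (fun q : M => q.2.2) (fun w : M => w.2.2).
Proof.
have h1 : is_diff p (@snd (K*K)%type (K*K)%type) snd := is_diff_snd _ _ _ p.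
have h2 : is_diff (snd p) (@snd K K) snd := is_diff_snd _ _ _ (snd p).
exact: (is_diff_comp h1 h2).
Qed.

Lemma dxi1 (p : M) : is_diff p (@xi1 R) (fun w => w.1.1 + 'i * w.1.2).
Proof.
have -> : @xi1 R = (fun q : M => q.1.1) + 'i *: (fun q : M => q.1.2) by [].
have := @is_diffD _ _ _ _ _ _ _ p (d11 p) (@is_diffZ _ _ _ _ _ 'i p (d12 p)).
by [].
Qed.

Lemma dC3 (p : M) : is_diff p (@C3 R)
  (fun w => p.1.1 * w.2.2 + p.2.2 * w.1.1 - (p.1.2 * w.2.1 + p.2.1 * w.1.2)).
Proof.
have -> : @C3 R = (fun q : M => q.1.1) * (fun q : M => q.2.2) - (fun q : M => q.1.2) * (fun q : M => q.2.1) by [].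
have := @is_diffB _ _ _ _ _ _ _ p (is_diffM (d11 p) (d22 p)) (is_diffM (d12 p) (d21 p)).
by [].
Qed.

Lemma dc1q (c1q : K * K -> K) (x : K * K) :
  x.1 ^+ 2 + x.2 ^+ 2 != 0 ->
  (\forall z \near x, c1q z ^+ 2 = z.1 ^+ 2 + z.2 ^+ 2) ->
  differentiable c1q x ->
  c1q x != 0 /\ forall w, 'd c1q x w = (x.1 * w.1 + x.2 * w.2) / c1q x.
Proof.
move=> hne hn hd.
have hx : c1q x ^+ 2 = x.1 ^+ 2 + x.2 ^+ 2 := nbhs_singleton hn.
have hg1 : is_diff x (fun z : K * K => z.1) fst := is_diff_fst _ _ _ x.
have hg2 : is_diff x (fun z : K * K => z.2) snd := is_diff_snd _ _ _ x.
pose g := (fun z : K * K => z.1) ^+ 2 + (fun z : K * K => z.2) ^+ 2.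
have hg : is_diff x g (2%:R * x.1 ^+ 1 *: fst + 2%:R * x.2 ^+ 1 *: snd) :=
  is_diffD (is_diffX 1 hg1) (is_diffX 1 hg2).
have c0 : c1q x != 0.
  by apply: contraNneq hne => h; rewrite -hx h expr0n.
have hc : is_diff x c1q ('d c1q x) := differentiableP hd.
have hc2 : is_diff x (c1q ^+ 2) (2%:R * c1q x ^+ 1 *: ('d c1q x : K * K -> K)) := is_diffX 1 hc.
split=> // w.
have e : 'D_w (c1q ^+ 2) x = 'D_w g x.
  apply: near_eq_derive; apply: filterS hn => z hz.
  rewrite exprfctE hz /g. by rewrite !fctE.
move: (hc2) (hg) => [dc2 vc2] [dg vg].
rewrite (deriveE _ dc2) (deriveE _ dg) in e.
have e1 := congr1 (fun f => f w) vc2.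
have e2 := congr1 (fun f => f w) vg.
have e3 := etrans (esym e1) (etrans e e2).
have h2 : (2 : K) * c1q x != 0 by rewrite mulf_neq0 // pnatr_eq0.
have e4 : 2 * c1q x * 'd c1q x w = 2 * x.1 * w.1 + 2 * x.2 * w.2.
  rewrite !fctE !expr1 in e3. exact: e3.
apply: (mulfI h2); rewrite e4; field; done.
Qed.

Lemma Lxi (p : M) w : 'd (@xi1 R) p w = w.1.1 + 'i * w.1.2.
Proof. by move: (dxi1 p) => [_ v]; have := congr1 (fun f => f w) v. Qed.

Lemma LC3 (p : M) w : 'd (@C3 R) p w =
  p.1.1 * w.2.2 + p.2.2 * w.1.1 - (p.1.2 * w.2.1 + p.2.1 * w.1.2).
Proof. by move: (dC3 p) => [_ v]; have := congr1 (fun f => f w) v. Qed.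

Lemma LC1 (c1q : K * K -> K) (p : M) (w : M) : differentiable c1q p.1 ->
  'd (C1 c1q) p w = 'd c1q (p.1 : K * K) w.1.
Proof.
move=> hd.
have h1 : is_diff p (@fst (K*K)%type (K*K)%type) fst := is_diff_fst _ _ _ p.
have h2 := differentiableP hd.
move: (is_diff_comp h1 h2) => [_ v].
by have := congr1 (fun f => f w) v.
Qed.

Lemma dC1 (c1q : K * K -> K) (p : M) : differentiable c1q p.1 ->
  differentiable (C1 c1q) p.
Proof.
move=> hd.
have h1 : is_diff p (@fst (K*K)%type (K*K)%type) fst := is_diff_fst _ _ _ p.
have h2 := differentiableP hd.
by move: (is_diff_comp h1 h2) => [].
Qed.

Lemma LC4 (c1q : K * K -> K) (p : M) (w : M) : differentiable c1q p.1 -> C1 c1q p != 0 ->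
  'd (C4 c1q) p w = 2^-1 * (2 * p.2.1 * w.2.1 + 2 * p.2.2 * w.2.2) + (C1 c1q p)^-2 * 'd c1q (p.1 : K * K) w.1.
Proof.
move=> hd c0.
have -> : C4 c1q = 2^-1 *: ((fun q : M => q.2.1) ^+ 2 + (fun q : M => q.2.2) ^+ 2)
   - (fun q => (C1 c1q q)^-1).
  apply/funext => q; rewrite /C4 !fctE mulrC; done.
have h1 := is_diffZ (2^-1 : K) (is_diffD (is_diffX 1 (d21 p)) (is_diffX 1 (d22 p))).
have hd1 := dC1 _ _ hd.
have h2 : is_diff p (fun q => (C1 c1q q)^-1) (- (C1 c1q p) ^- 2 \*: 'd (C1 c1q) p).
  by apply: DiffDef; [exact: differentiableV | exact: diffV].
move: (is_diffB h1 h2) => [_ v].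
have := congr1 (fun f => f w) v.
rewrite !fctE => ->.
change (2^-1 * (2 * p.2.1 * w.2.1 + 2 * p.2.2 * w.2.2) - (- C1 c1q p ^- 2 * 'd (C1 c1q) p w) = 2^-1 * (2 * p.2.1 * w.2.1 + 2 * p.2.2 * w.2.2) +
  C1 c1q p ^- 2 * 'd c1q (p.1 : K * K) w.1).
rewrite LC1 //; ring.
Qed.
End P.

Theorem proposition2 (R : realType) (c1q : Cx R * Cx R -> Cx R)
    (p : (Cx R * Cx R) * (Cx R * Cx R)) :
  p.1.1 ^+ 2 + p.1.2 ^+ 2 != 0 ->
  (\forall z \near (p.1 : Cx R * Cx R), c1q z ^+ 2 = z.1 ^+ 2 + z.2 ^+ 2) ->
  differentiable c1q p.1 ->
  C2 p + 'i * C3 p != 0 ->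
  forall u v : (Cx R * Cx R) * (Cx R * Cx R),
    omega u v =
      wedge (fun w => ('i / C1 c1q p - C3 p / (C1 c1q p * (C2 p + 'i * C3 p)))
                        * 'd (C1 c1q) p w
                      - ('i / xi1 p) * 'd (@xi1 R) p w)
            ('d (@C3 R) p) u v
      + (C1 c1q p / (C2 p + 'i * C3 p)) * wedge ('d (C1 c1q) p) ('d (C4 c1q) p) u v.
Proof.
move=> hne hn hd hD u v.
have [c0 Lc] := @dc1q R c1q p.1 hne hn hd.
have c0' : C1 c1q p != 0 := c0.
have hc : c1q p.1 ^+ 2 = p.1.1 ^+ 2 + p.1.2 ^+ 2 := nbhs_singleton hn.
rewrite /wedge /omega.
generalize (@Lxi R p u) (@Lxi R p v) (@LC3 R p u) (@LC3 R p v).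
generalize ('d (@xi1 R) p u) ('d (@xi1 R) p v) ('d (@C3 R) p u) ('d (@C3 R) p v).
intros dxu dxv d3u d3v -> -> -> ->.
generalize (@LC4 R c1q p u hd c0') (@LC4 R c1q p v hd c0') (@LC1 R c1q p u hd) (@LC1 R c1q p v hd).
generalize ('d (C4 c1q) p u) ('d (C4 c1q) p v) ('d (C1 c1q) p u) ('d (C1 c1q) p v).
intros d4u d4v d1u d1v -> -> -> ->.
generalize (Lc u.1) (Lc v.1).
generalize ('d c1q (p.1 : Cx R * Cx R) u.1) ('d c1q (p.1 : Cx R * Cx R) v.1).
intros dcu dcv -> ->.
rewrite /C1 /C2 /C3 /xi1 /eta2 in hD *.
move: hc c0 hD hne; generalize (c1q p.1) => c.
clear Lc c0' hd hn.
case: p => [[x1 x2] [y1 y2]]; case: u => [[a1 a2] [b1 b2]]; case: v => [[e1 e2] [f1 f2]] /=.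
move=> hc c0 hD hne.
move: (@sqrCi (Cx R)) hD; generalize (@Num.imaginary (Cx R)) => j hi hD.
have hxi : (x1 + j * x2) != 0.
  apply: contraNneq hne => h.
  have e : x1 ^+ 2 + x2 ^+ 2 = (x1 + j * x2) * (x1 - j * x2) + (j ^+ 2 + 1) * x2 ^+ 2 by ring.
  by rewrite e h hi addNr !mul0r addr0.
have h2 : (2 : Cx R) != 0 by rewrite pnatr_eq0.
apply/eqP; rewrite -subr_eq0; apply/eqP.
transitivity (- (((j * ((x1 + j * x2) * (y1 - j * y2) + j * (x1 * y2 - x2 * y1)) - (x1 * y2 - x2 * y1)) * (x1 + j * x2) * (x1 * a1 + x2 * a2) - j * c ^+ 2 * ((x1 + j * x2) * (y1 - j * y2) + j * (x1 * y2 - x2 * y1)) * (a1 + j * a2)) * (x1 * f2 + y2 * e1 - (x2 * f1 + y1 * e2)) - ((j * ((x1 + j * x2) * (y1 - j * y2) + j * (x1 * y2 - x2 * y1)) - (x1 * y2 - x2 * y1)) * (x1 + j * x2) * (x1 * e1 + x2 * e2) - j * c ^+ 2 * ((x1 + j * x2) * (y1 - j * y2) + j * (x1 * y2 - x2 * y1)) * (e1 + j * e2)) * (x1 * b2 + y2 * a1 - (x2 * b1 + y1 * a2)) + c ^+ 2 * (x1 + j * x2) * ((x1 * a1 + x2 * a2) * (y1 * f1 + y2 * f2) - (x1 * e1 + x2 * e2) * (y1 * b1 + y2 * b2)) - c ^+ 2 * ((x1 + j * x2) * (y1 - j * y2) + j * (x1 * y2 - x2 * y1)) * (x1 + j * x2)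 * (a1 * f1 - e1 * b1 + (a2 * f2 - e2 * b2))) / (c ^+ 2 * ((x1 + j * x2) * (y1 - j * y2) + j * (x1 * y2 - x2 * y1)) * (x1 + j * x2))).
  by field; rewrite ?c0 ?hD ?hxi ?h2.
rewrite hc.
have -> : (((j * ((x1 + j * x2) * (y1 - j * y2) + j * (x1 * y2 - x2 * y1)) - (x1 * y2 - x2 * y1)) * (x1 + j * x2) * (x1 * a1 + x2 * a2) - j * (x1 ^+ 2 + x2 ^+ 2) * ((x1 + j * x2) * (y1 - j * y2) + j * (x1 * y2 - x2 * y1)) * (a1 + j * a2)) * (x1 * f2 + y2 * e1 - (x2 * f1 + y1 * e2)) - ((j * ((x1 + j * x2) * (y1 - j * y2) + j * (x1 * y2 - x2 * y1)) - (x1 * y2 - x2 * y1)) * (x1 + j * x2) * (x1 * e1 + x2 * e2) - j * (x1 ^+ 2 + x2 ^+ 2) * ((x1 + j * x2) * (y1 - j * y2) + j * (x1 * y2 - x2 * y1)) * (e1 + j * e2)) * (x1 * b2 + y2 * a1 - (x2 * b1 + y1 * a2)) + (x1 ^+ 2 + x2 ^+ 2) * (x1 + j * x2) * ((x1 * a1 + x2 * a2) * (y1 * f1 + y2 * f2) - (x1 * e1 + x2 * e2) * (y1 * b1 + y2 * b2)) - (x1 ^+ 2 + x2 ^+ 2) * ((x1 + j * x2) * (y1 - j * y2) + j * (x1 * y2 - x2 * y1)) * (x1 + j * x2) * (a1 * f1 - e1 * b1 + (a2 * f2 - e2 * b2))) = (j ^+ 2 + 1) * ((x1*x2^+2*y1*y2*a2*e1)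 + (-x1*x2^+2*y1*y2*a1*e2) + (-x1*x2^+3*y2*b2*e2) + (x1*x2^+3*y2*a2*f2) + (-x1^+2*x2*y2^+2*a2*e1) + (x1^+2*x2*y2^+2*a1*e2) + (x1^+2*x2*y1^+2*a2*e1) + (-x1^+2*x2*y1^+2*a1*e2) + (-x1^+2*x2^+2*y2*b2*e1) + (-x1^+2*x2^+2*y2*b1*e2) + (x1^+2*x2^+2*y2*a2*f1) + (x1^+2*x2^+2*y2*a1*f2) + (x1^+2*x2^+2*y1*b1*e1) + (-x1^+2*x2^+2*y1*a1*f1) + (-x1^+3*y1*y2*a2*e1) + (x1^+3*y1*y2*a1*e2) + (-x1^+3*x2*y2*b1*e1) + (x1^+3*x2*y2*a1*f1) + (-x1^+3*x2*y1*b2*e1) + (-x1^+3*x2*y1*b1*e2) + (x1^+3*x2*y1*a2*f1) + (x1^+3*x2*y1*a1*f2) + (x1^+4*y1*b2*e2) + (-x1^+4*y1*a2*f2) + (j*x2^+3*y1*y2*a2*e1) + (-j*x2^+3*y1*y2*a1*e2) + (-j*x2^+4*y2*b2*e2) + (j*x2^+4*y2*a2*f2) + (-j*x1*x2^+2*y2^+2*a2*e1) + (j*x1*x2^+2*y2^+2*a1*e2) + (-j*x1*x2^+3*y2*b2*e1) + (-j*x1*x2^+3*y2*b1*e2) + (j*x1*x2^+3*y2*a2*f1) + (j*x1*x2^+3*y2*a1*f2) + (-j*x1^+2*x2^+2*y2*b1*e1) + (j*x1^+2*x2^+2*y2*a1*f1) + (-j^+2*x1*x2^+2*y1*y2*a2*e1)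 + (j^+2*x1*x2^+2*y1*y2*a1*e2) + (-j^+2*x1*x2^+3*y2*b1*e1) + (j^+2*x1*x2^+3*y2*a1*f1) + (j^+2*x1^+2*x2*y2^+2*a2*e1) + (-j^+2*x1^+2*x2*y2^+2*a1*e2) + (j^+2*x1^+2*x2^+2*y2*b2*e1) + (j^+2*x1^+2*x2^+2*y2*b1*e2) + (-j^+2*x1^+2*x2^+2*y2*a2*f1) + (-j^+2*x1^+2*x2^+2*y2*a1*f2) + (-j^+2*x1^+3*x2*y2*b2*e2) + (j^+2*x1^+3*x2*y2*a2*f2)) by ring.
by rewrite hi addNr !mul0r oppr0 mul0r.
Qed.
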